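(* Let $n\ge1$ and $u\in\mathfrak{S}_n$. The Hopf algebra morphism $\mathcal{D}\colon\mathfrak{S}Sym\to QSym$, $\mathcal{F}_u\mapsto F_{\mathrm{Des}(u)}$, satisfies $$\mathcal{D}(\mathcal{M}_u)=\begin{cases}M_{\mathrm{GDes}(u)}&\text{if }u\text{ is closed},\\ 0&\text{otherwise.}\end{cases}$$
   Context: Permutations in one-line notation. $\mathrm{Des}(u)=\{p\in[n-1]:u_p>u_{p+1}\}$, $\mathrm{GDes}(u)=\{p\in[n-1]:u_i>u_j\text{ for all }i\le p<j\}$. For $J=\{p_1<\cdots<p_k\}\subseteq[n-1]$, $\zeta_J=(n{-}p_1{+}1,\ldots,n,\ n{-}p_2{+}1,\ldots,n{-}p_1,\ldots,1,\ldots,n{-}p_k)$, $\zeta_\emptyset=1_n$. A permutation $u\in\mathfrak{S}_n$ is closed if $u=\zeta_J$ for some $J\subseteq[n-1]$ (equivalently $\mathrm{Des}(u)=\mathrm{GDes}(u)$). $\mathfrak{S}Sym$ has basis $\{\mathcal{F}_u\}$; with the weak order ($u\le v$ iff $\mathrm{Inv}(u)\subseteq\mathrm{Inv}(v)$, $\mathrm{Inv}(u)=\{(i,j):i<j,u_i>u_j\}$) and its Möbius function $\mu$, $\mathcal{M}_u=\sum_{v\ge u}\mu(u,v)\mathcal{F}_v$. $QSym$ is the algebra of quasi-symmetric functions in commuting variables $x_1,x_2,\ldots$; for $J=\{j_1<\cdots<j_{k-1}\}\subseteq[n-1]$ with associated composition $\alpha=(j_1,j_2-j_1,\ldots,n-j_{k-1})$,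 the monomial quasi-symmetric function is $M_J=M_{J,n}=\sum_{i_1<\cdots<i_k}x_{i_1}^{\alpha_1}\cdots x_{i_k}^{\alpha_k}$ and the fundamental one is $F_J=\sum_{K\supseteq J,\,K\subseteq[n-1]}M_K$. The map $\mathcal{D}$ is (known to be) a morphism of Hopf algebras. *)

(* Defs.v *)
From HB Require Import structures.
From mathcomp Require Import all_boot all_order all_algebra all_fingroup.
From mathcomp Require Import mpoly.

Set Implicit Arguments.
Unset Strict Implicit.
Unset Printing Implicit Defensive.

Import GRing.Theory.


(* Permutations u : 'S_n, positions 0-indexed internally; the paper's
   position p (1-indexed) is index p-1.  Subsets of [n-1] = {1,...,n-1}
   are encoded as sets J : {set 'I_n} with 0 \notin J. *)

Section Defs.
Variable n : nat.

Definition oneline (u : 'S_n) : seq nat := [seq (val (u i)).+1 | i <- enum 'I_n].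

Definition subset_n1 (J : {set 'I_n}) : bool := [forall p in J, 0 < val p].

Definition Des (u : 'S_n) : {set 'I_n} :=
  [set p : 'I_n | (0 < val p) &&
     (nth 0%N (oneline u) (val p).-1 > nth 0%N (oneline u) (val p))%N].

Definition GDes (u : 'S_n) : {set 'I_n} :=
  [set p : 'I_n | (0 < val p) &&
     [forall i : 'I_n, forall j : 'I_n,
        ((val i < val p)%N && (val p <= val j)%N) ==> (val (u j) < val (u i))%N]].

Definition zeta (J : {set 'I_n}) : seq nat :=
  let ps := sort leq [seq val p | p in J] in
  flatten (pairmap (fun a b => iota (n - b).+1 (b - a)) 0%N (ps ++ [:: n])).

Definition is_closed (u : 'S_n) : bool :=
  [exists J : {set 'I_n}, subset_n1 J && (oneline u == zeta J)].

Definition Inv (u : 'S_n) : {set 'I_n * 'I_n} :=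
  [set ij : 'I_n * 'I_n | (val ij.1 < val ij.2)%N && (val (u ij.2) < val (u ij.1))%N].

Definition weak_le (u v : 'S_n) : bool := Inv u \subset Inv v.
Definition weak_lt (u v : 'S_n) : bool := (u != v) && weak_le u v.

(* Computed with fuel; fuel #|Inv v| suffices since w < v implies
   #|Inv w| < #|Inv v|. *)
Fixpoint mu_aux (k : nat) (u v : 'S_n) : int :=
  if u == v then 1%R else
  if k is k'.+1 then (- \sum_(w : 'S_n | weak_le u w && weak_lt w v) mu_aux k' u w)%R
  else 0%R.

Definition mu (u v : 'S_n) : int :=
  if weak_le u v then mu_aux #|Inv v| u v else 0%R.

(* SSym in degree n, as formal Z-linear combinations of the F_u *)
Notation SSymn := {ffun 'S_n -> int}.

Definition calF (u : 'S_n) : SSymn := [ffun v => (v == u)%:R%R].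

Definition calM (u : 'S_n) : SSymn :=
  [ffun w => (\sum_(v : 'S_n | weak_le u v) mu u v * calF v w)%R].

(* QSym, realised as quasi-symmetric polynomials in N variables x_0..x_{N-1} *)
Variable N : nat.

Definition compo (J : {set 'I_n}) : seq nat :=
  let ps := sort leq [seq val p | p in J] in
  pairmap (fun a b => b - a)%N 0%N (ps ++ [:: n]).

Definition QM (J : {set 'I_n}) : {mpoly int[N]} :=
  \sum_(S : {set 'I_N} | #|S| == size (compo J))
    (\prod_(i in S) 'X_i ^+ nth 0%N (compo J) #|[set j in S | (val j < val i)%N]|)%R.

Definition QF (J : {set 'I_n}) : {mpoly int[N]} :=
  \sum_(K : {set 'I_n} | subset_n1 K && (J \subset K)) QM K.

(* the (degree n part of the) morphism D : F_u |-> F_{Des u}, extended linearly *)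
Definition DD (x : SSymn) : {mpoly int[N]} :=
  \sum_(v : 'S_n) (x v *: QF (Des v))%R.

End Defs.

(* Main.v *)
Require Import Defs.
From mathcomp Require Import all_boot all_order all_algebra all_fingroup.
From mathcomp Require Import mpoly.
From mathcomp Require Import zify.
Import GRing.Theory.

Lemma card_iota n (P : pred nat) : #|[set j : 'I_n | P j]| = count P (iota 0 n).
Proof.
rewrite cardsE cardE /enum_mem size_filter -enumT -val_enum_ord count_map.
by apply: eq_count => j /=.
Qed.
Lemma count_iota_all (P : pred nat) a d : (forall x, a <= x < a + d -> P x) -> count P (iota a d) = d.
Proof.
move=> H; rewrite (eq_in_count (a2 := predT)) ?count_predT ?size_iota // => x.
by rewrite mem_iota => /H.
Qed.
Lemma count_iota_none (P : pred nat) a d : (forall x, a <= x < a + d -> ~~ P x) -> count P (iota a d) = 0.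
Proof.
move=> H; rewrite (eq_in_count (a2 := pred0)) ?count_pred0 // => x.
by rewrite mem_iota => /H /negbTE.
Qed.
Lemma iota3 a b n : a <= b <= n -> iota 0 n = iota 0 a ++ iota a (b - a) ++ iota b (n - b).
Proof.
move=> /andP[ab bn].
rewrite {1}(_ : n = a + ((b-a) + (n-b))); last lia.
rewrite iotaD iotaD add0n; congr (_ ++ (_ ++ iota _ _)); lia.
Qed.
Lemma count_int n a b : a <= b <= n -> count (fun x => a <= x < b) (iota 0 n) = b - a.
Proof.
move=> H; rewrite (@iota3 a b n H) !count_cat.
rewrite (@count_iota_none _ 0 a) ?(@count_iota_all _ a) ?(@count_iota_none _ b) => //; move=> *; lia.
Qed.

Lemma rank_perm n (u : 'S_n) i : val (u i) = #|[set j | val (u j) < val (u i)]|.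
Proof.
have -> : [set j | val (u j) < val (u i)] = u @^-1: [set k : 'I_n | val k < val (u i)].
  by apply/setP => j; rewrite !inE.
rewrite card_preimset; last exact: perm_inj.
rewrite (card_iota n (fun x => x < val (u i))) (eq_count (a2 := fun x => 0 <= x < val (u i))) ?count_int ?subn0 //.
by rewrite /= ltnW.
Qed.

Lemma lt_Inv n (u : 'S_n) i j :
  (val (u j) < val (u i)) = ((val j < val i) && ((j, i) \notin Inv u)) || ((i, j) \in Inv u).
Proof.
rewrite !inE /=; case: (ltngtP (val j) (val i)) => hji /=.
- have : u j != u i by rewrite (inj_eq perm_inj) -val_eqE /= neq_ltn hji.
  rewrite -val_eqE /= => ne; rewrite orbF; lia.
- by [].
- have -> : j = i by apply: val_inj.
  by rewrite ltnn.
Qed.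

Lemma Inv_inj n (u v : 'S_n) : Inv u = Inv v -> u = v.
Proof.
move=> E; apply/permP => i; apply/val_inj.
rewrite rank_perm [RHS]rank_perm; apply: eq_card => j.
by rewrite !inE !lt_Inv E.
Qed.

Lemma weak_lt_card n (w v : 'S_n) : weak_lt w v -> #|Inv w| < #|Inv v|.
Proof.
move=> /andP[neq le]; apply: proper_card.
rewrite properEneq; rewrite /weak_le in le; rewrite le andbT; apply: contra neq => /eqP E; apply/eqP; exact: Inv_inj.
Qed.

Lemma weak_le_anti n (u v : 'S_n) : weak_le u v -> weak_le v u -> u = v.
Proof. by move=> h1 h2; apply: Inv_inj; apply/eqP; rewrite eqEsubset; apply/andP. Qed.

Lemma weak_le_trans n (u v w : 'S_n) : weak_le u v -> weak_le v w -> weak_le u w.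
Proof. exact: subset_trans. Qed.

Lemma mu_aux_S n (u : 'S_n) k v : #|Inv v| <= k -> mu_aux k.+1 u v = mu_aux k u v.
Proof.
elim: k v => [|k IH] v hv.
  rewrite /=; case: eqP => // _.
  rewrite big1 ?oppr0 // => w /andP[_ /weak_lt_card]; lia.
rewrite /=; case: eqP => // _; congr (- _)%R; apply: eq_bigr => w /andP[_ /weak_lt_card h].
apply: IH; lia.
Qed.

Lemma mu_aux_big n (u : 'S_n) k v : #|Inv v| <= k -> mu_aux k u v = mu_aux #|Inv v| u v.
Proof.
elim: k => [|k IH] h.
  by have -> : #|Inv v| = 0 by lia.
case: (ltnP #|Inv v| k.+1) => h2.
  rewrite mu_aux_S ?IH //; lia.
by have -> : #|Inv v| = k.+1 by lia.
Qed.

Lemma mu_out n (u v : 'S_n) : ~~ weak_le u v -> mu u v = 0%R.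
Proof. by rewrite /mu => /negbTE ->. Qed.

Lemma mob n (u z : 'S_n) : weak_le u z -> (\sum_(v | weak_le v z) mu u v = (u == z)%:R)%R.
Proof.
move=> uz.
rewrite (bigID (fun v => weak_le u v)) /= [X in (_ + X)%R]big1 ?addr0; last first.
  by move=> v /andP[_ h]; rewrite mu_out.
case: (eqVneq u z) => [<-|neq].
  rewrite (big_pred1 u); last first.
    move=> v /=; apply/andP/eqP => [[h1 h2]|->]; first exact: weak_le_anti.
    by rewrite /weak_le subxx.
  by rewrite /mu /weak_le subxx; case: #|_| => /=; rewrite eqxx.
rewrite (bigD1 z) /=; last by rewrite uz /weak_le subxx.
have hc : #|Inv u| < #|Inv z| by apply: weak_lt_card; rewrite /weak_lt neq.
have [k hk] : exists k, #|Inv z| = k.+1 by exists #|Inv z|.-1; lia.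
rewrite (eq_bigl (fun w => weak_le u w && weak_lt w z)); last first.
  by move=> w; rewrite /weak_lt; case: (weak_le u w); case: (weak_le w z); case: (w != z).
rewrite (eq_bigr (fun w => mu_aux k u w)); last first.
  move=> w /andP[h1 /weak_lt_card h2].
  rewrite /mu h1 -(@mu_aux_big _ u k w) //; lia.
by rewrite /mu uz hk /= (negbTE neq) addNr.
Qed.

Set Implicit Arguments.
Unset Strict Implicit.

Definition bl n (K : {set 'I_n}) (m : nat) := #|[set p in K | val p <= m]|.

Lemma bl_mono n (K : {set 'I_n}) m1 m2 : m1 <= m2 -> bl K m1 <= bl K m2.
Proof.
move=> h; apply: subset_leq_card; apply/subsetP => p; rewrite !inE => /andP[-> /=]; lia.
Qed.

Lemma bl_le_n n (K : {set 'I_n}) m : bl K m <= n.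
Proof. by rewrite -[X in _ <= X]card_ord max_card. Qed.

Lemma bl_lt_wit n (K : {set 'I_n}) m1 m2 p : p \in K -> m1 < val p <= m2 -> bl K m1 < bl K m2.
Proof.
move=> pK /andP[h1 h2]; apply: proper_card; apply/properP; split.
  apply/subsetP => r; rewrite !inE => /andP[-> /=]; lia.
by exists p; rewrite !inE pK //= ?h2 //; rewrite leqNgt h1.
Qed.

Lemma bl_eq n (K : {set 'I_n}) m1 m2 : m1 <= m2 ->
  (forall p, p \in K -> ~~ (m1 < val p <= m2)) -> bl K m1 = bl K m2.
Proof.
move=> h H; rewrite /bl; apply: eq_card => p; rewrite !inE.
case pK: (p \in K) => //=; have := H p pK; case: p {pK} => /= x _; lia.
Qed.

Lemma bl_ltP n (K : {set 'I_n}) m1 m2 : m1 <= m2 ->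
  (bl K m1 < bl K m2) = [exists p in K, m1 < val p <= m2].
Proof.
move=> h; apply/idP/idP => [lt|/existsP [p /andP[pK hp]]]; last exact: bl_lt_wit pK hp.
case: existsP => // H.
suff E : bl K m1 = bl K m2 by move: lt; rewrite E ltnn.
apply: bl_eq => // p pK; apply/negP => hp; by apply: H; exists p; rewrite pK.
Qed.

Definition keyn n (K : {set 'I_n}) (m : nat) := (n - bl K m) * n + m.

Lemma arith n bi bj i j : bi <= n -> bj <= n -> i < n -> j < n ->
  ((n - bj) * n + j < (n - bi) * n + i) = (bi < bj) || ((bj == bi) && (j < i)).
Proof.
move=> hi hj hin hjn; case: (ltngtP bi bj) => h /=.
- have : n - bj < n - bi by lia.
  move: (n - bj) (n - bi) => A B hAB.
  have : A.+1 * n <= B * n by rewrite leq_mul2r hAB orbT.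
  lia.
- have : n - bi < n - bj by lia.
  move: (n - bj) (n - bi) => A B hAB.
  have : B.+1 * n <= A * n by rewrite leq_mul2r hAB orbT.
  lia.
- by rewrite h ltn_add2l.
Qed.

Lemma key_lt n (K : {set 'I_n}) (i j : nat) : i < n -> j < n ->
  (keyn K j < keyn K i) = (bl K i < bl K j) || ((bl K j == bl K i) && (j < i)).
Proof. by move=> hi hj; apply: arith => //; apply: bl_le_n. Qed.

Definition zrank n (K : {set 'I_n}) (i : 'I_n) := #|[set j : 'I_n | keyn K j < keyn K i]|.

Lemma zrank_lt n (K : {set 'I_n}) i : zrank K i < n.
Proof.
rewrite -[X in _ < X]card_ord -cardsT; apply: proper_card; apply/properP; split.
  exact: subsetT.
by exists i; rewrite !inE ?ltnn.
Qed.

Lemma zrank_mono n (K : {set 'I_n}) (i j : 'I_n) : keyn K i < keyn K j -> zrank K i < zrank K j.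
Proof.
move=> h; apply: proper_card; apply/properP; split.
  apply/subsetP => r; rewrite !inE => h2; lia.
by exists i; rewrite !inE ?ltnn.
Qed.

Lemma keyn_inj n (K : {set 'I_n}) (i j : 'I_n) : keyn K i = keyn K j -> i = j.
Proof.
move=> /(congr1 (modn^~ n)); rewrite /keyn !modnMDl !modn_small ?ltn_ord //.
exact: val_inj.
Qed.

Lemma zrank_inj n (K : {set 'I_n}) : injective (fun i => Ordinal (zrank_lt K i)).
Proof.
move=> i j /(congr1 val) /= E.
case: (ltngtP (keyn K i) (keyn K j)) => h.
- by have := zrank_mono h; rewrite E ltnn.
- by have := zrank_mono h; rewrite E ltnn.
- exact: (keyn_inj h).
Qed.

Definition zperm n (K : {set 'I_n}) : 'S_n := perm (@zrank_inj n K).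

Lemma zperm_val n (K : {set 'I_n}) i : val (zperm K i) = zrank K i.
Proof. by rewrite permE. Qed.

Lemma zperm_lt n (K : {set 'I_n}) i j :
  (val (zperm K j) < val (zperm K i)) = (keyn K j < keyn K i).
Proof.
rewrite !zperm_val; apply/idP/idP; last exact: zrank_mono.
case: (ltngtP (keyn K j) (keyn K i)) => // h.
  by move=> h2; have := zrank_mono h; lia.
by move: h => /keyn_inj ->; rewrite ltnn.
Qed.

Lemma zperm_lt_ij n (K : {set 'I_n}) (i j : 'I_n) : val i < val j ->
  (val (zperm K j) < val (zperm K i)) = (bl K i < bl K j).
Proof.
move=> ij; rewrite zperm_lt key_lt ?ltn_ord //.
by rewrite (ltnNge j i) (ltnW ij) andbF orbF.
Qed.
Ltac norm_ord := repeat match goal with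
  | H : context [@isSub.val_subdef nat ?P ?S ?M ?x] |- _ => change (@isSub.val_subdef nat P S M x) with (nat_of_ord x) in H
  | |- context [@isSub.val_subdef nat ?P ?S ?M ?x] => change (@isSub.val_subdef nat P S M x) with (nat_of_ord x) end.
Ltac olia := norm_ord; lia.

Lemma nth_oneline n (v : 'S_n) (i : 'I_n) : nth 0 (oneline v) (val i) = (val (v i)).+1.
Proof. by rewrite /oneline (nth_map i) ?size_enum_ord ?ltn_ord // nth_ord_enum. Qed.

Lemma in_Inv_z n (K : {set 'I_n}) (i j : 'I_n) :
  ((i, j) \in Inv (zperm K)) = (val i < val j) && (bl K i < bl K j).
Proof.
rewrite inE /=; case: (ltnP (val i) (val j)) => h //=; exact: zperm_lt_ij.
Qed.

Lemma bl_pred_eq n (K : {set 'I_n}) (p : 'I_n) : 0 < val p ->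
  bl K (val p).-1 < bl K (val p) -> p \in K.
Proof.
move=> p0; rewrite bl_ltP; last olia.
move=> /existsP [q /andP[qK hq]].
have -> : p = q by apply: val_inj; move: p0 hq; case: p => /= a _; case: q {qK} => /= b _; olia.
done.
Qed.

Lemma Des_sub n (K : {set 'I_n}) (v : 'S_n) :
  (Des v \subset K) = weak_le v (zperm K).
Proof.
apply/idP/idP => H.
- apply/subsetP => [[i j]]; rewrite in_Inv_z inE /= => /andP[ij vji].
  rewrite ij /= bl_ltP; last by rewrite ltnW.
  case: existsP => // N0; exfalso.
  suff : forall d, val i + d <= val j -> nth 0 (oneline v) (val i) <= nth 0 (oneline v) (val i + d).
    move=> /(_ (val j - val i)); rewrite subnKC ?(ltnW ij) // => /(_ (leqnn _)).
    rewrite !nth_oneline; olia.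
  elim=> [|d IH] hd; first by rewrite addn0.
  have hlt : val i + d.+1 < n by have := ltn_ord j; olia.
  pose p := Ordinal hlt.
  have pK : p \notin K.
    apply/negP => pK; apply: N0; exists p; rewrite pK /=; olia.
  have pD : p \notin Des v by apply: contra pK; apply: (subsetP H).
  move: pD; rewrite inE /= addnS /= -leqNgt => h2.
  apply: leq_trans (IH _) h2; olia.
- apply/subsetP => p; rewrite inE => /andP[p0 hd].
  have hp1 : (val p).-1 < n by have := ltn_ord p; olia.
  pose i := Ordinal hp1.
  have hI : (i, p) \in Inv v.
    rewrite inE /=; apply/andP; split; first olia.
    move: hd; rewrite -[(val p).-1]/(val i) !nth_oneline; olia.
  have := subsetP H _ hI; rewrite in_Inv_z /= => /andP[_].
  exact: bl_pred_eq.
Qed.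

Lemma GDes_z n (K : {set 'I_n}) : subset_n1 K -> GDes (zperm K) = K.
Proof.
move=> /forallP sK; apply/setP => p; rewrite inE.
apply/andP/idP => [[p0 /forallP H]|pK].
  have hp1 : (val p).-1 < n by have := ltn_ord p; olia.
  pose i := Ordinal hp1.
  have := H i => /forallP /(_ p); rewrite /= (_ : (val p).-1 < val p) ?leqnn //=; last olia.
  rewrite zperm_lt_ij /=; last olia.
  exact: bl_pred_eq.
split; first by have := sK p; rewrite pK.
apply/forallP => i; apply/forallP => j; apply/implyP => /andP[h1 h2].
rewrite zperm_lt_ij; last olia.
apply: (bl_lt_wit pK); olia.
Qed.

Lemma iota4 a x q n : a <= x <= q -> q <= n ->
  iota 0 n = iota 0 a ++ iota a (x - a) ++ iota x (q - x) ++ iota q (n - q).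
Proof.
move=> /andP[h1 h2] h3.
rewrite {1}(_ : n = a + ((x-a) + ((q - x) + (n-q)))); last lia.
rewrite !iotaD add0n; congr (_ ++ (_ ++ (iota _ _ ++ iota _ _))); lia.
Qed.

Lemma z_block n (K : {set 'I_n}) a q x (xlt : x < n) :
  (0 < a < n -> exists2 p, p \in K & val p = a) ->
  (q < n -> exists2 p, p \in K & val p = q) ->
  (forall p, p \in K -> ~~ (a < val p < q)) ->
  a <= x < q -> q <= n ->
  val (zperm K (Ordinal xlt)) = n - q + (x - a).
Proof.
move=> Pa Pq NK /andP[ax xq] qn.
rewrite zperm_val /zrank.
rewrite (card_iota n (fun m => keyn K m < keyn K x)).
rewrite (eq_in_count (a2 := fun m => (a <= m < x) || (q <= m))); last first.
  move=> m; rewrite mem_iota add0n => /andP[_ mn].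
  rewrite key_lt //.
  have noK : forall m1 m2, a <= m1 -> m1 <= m2 -> m2 < q -> bl K m1 = bl K m2.
    move=> m1 m2 h1 h2 h3; apply: bl_eq => // p pK; have := NK p pK; lia.
  case: (ltnP m a) => ma.
    have [p pK pa] : exists2 p, p \in K & val p = a by apply: Pa; lia.
    have : bl K m < bl K x by apply: (bl_lt_wit pK); lia.
    lia.
  case: (ltnP m x) => mx.
    have := noK m x ma (ltnW mx) xq; lia.
  case: (ltnP m q) => mq.
    have := noK x m ax mx mq; lia.
  have [p pK pq] : exists2 p, p \in K & val p = q by apply: Pq; lia.
  have : bl K x < bl K m by apply: (bl_lt_wit pK); lia.
  lia.
rewrite (@iota4 a x q n) ?ax ?xq ?(ltnW xq) //= !count_cat.
rewrite (@count_iota_none _ 0 a) ?(@count_iota_all _ a) ?(@count_iota_none _ x) ?(@count_iota_all _ q) => //; try (move=> *; lia).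
Qed.

Lemma path_le_last x s : path ltn x s -> x <= last x s.
Proof.
elim: s x => [|y s IH] x //= /andP[h1 h2]; have := IH _ h2; lia.
Qed.

Lemma zeta_ind n (K : {set 'I_n}) : forall s a, a <= n ->
  (0 < a < n -> exists2 p, p \in K & val p = a) -> path ltn a s -> last a s = n ->
  (forall m, a < m < n -> (m \in s) = [exists p in K, val p == m]) ->
  flatten (pairmap (fun a b => iota (n - b).+1 (b - a)) a s) =
  map (nth 0 (oneline (zperm K))) (iota a (n - a)).
Proof.
elim=> [|q s IH] a an Pa hp hl hm.
  by rewrite /= in hl; rewrite /= hl subnn.
move: hp => /= /andP[aq hp]; rewrite /= in hl.
have qn : q <= n by rewrite -hl path_le_last.
have Pq' : q < n -> exists2 p, p \in K & val p = q.
  move=> qn'; have := hm q; rewrite aq qn' inE eqxx /= => /(_ isT) /esym /existsP [p /andP[pK /eqP pq]].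
  by exists p.
have Pq : 0 < q < n -> exists2 p, p \in K & val p = q by move=> /andP[_]; exact: Pq'.
have NK : forall p, p \in K -> ~~ (a < val p < q).
  move=> p pK; apply/negP => /andP[h1 h2].
  have hpn : a < val p < n by rewrite h1 ltn_ord.
  have := hm _ hpn.
  have -> : [exists p0 in K, val p0 == val p] by apply/existsP; exists p; rewrite pK eqxx.
  rewrite inE (ltn_eqF h2) /= => hps.
  move: hp; rewrite (path_sortedE ltn_trans) => /andP[/allP /(_ _ hps)]; olia.
rewrite {1}(_ : n - a = (q - a) + (n - q)); last lia.
rewrite iotaD (_ : a + (q - a) = q); last lia.
rewrite map_cat; congr (_ ++ _); last first.
  apply: IH => //.
  move=> m /andP[qm mn]; rewrite -hm; first by rewrite inE (gtn_eqF qm).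
  rewrite mn andbT; lia.
apply: (@eq_from_nth _ 0); first by rewrite size_map !size_iota.
move=> k; rewrite size_iota => hk.
rewrite (nth_map 0) ?size_iota // !nth_iota //.
have hx : a + k < n by lia.
rewrite -[a + k]/(val (Ordinal hx)) nth_oneline (@z_block n K a q (a + k) hx) //; try lia.
Qed.

Lemma zeta_z n (K : {set 'I_n}) : 0 < n -> subset_n1 K -> zeta K = oneline (zperm K).
Proof.
move=> n0 /forallP sK.
rewrite -[oneline _](mkseq_nth 0) /mkseq.
have -> : size (oneline (zperm K)) = n by rewrite size_map size_enum_ord.
rewrite /zeta /=.
rewrite (@zeta_ind n K _ 0) ?subn0 //.
- rewrite cat_path /= andbT; apply/andP; split.
    rewrite (path_sortedE ltn_trans); apply/andP; split.
      apply/allP => x; rewrite mem_sort => /imageP [p pK ->]; have := sK p; rewrite pK.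
      by [].
    rewrite ltn_sorted_uniq_leq sort_uniq sort_sorted ?andbT; last exact: leq_total.
    rewrite /image_mem map_inj_uniq ?enum_uniq //; exact: val_inj.
  have := mem_last 0 (sort leq [seq val p | p in K]); rewrite inE => /orP [/eqP ->//|].
  by rewrite mem_sort => /imageP [p _ ->]; exact: ltn_ord.
- by rewrite last_cat.
- move=> m /andP[m0 mn]; rewrite mem_cat inE (ltn_eqF mn) orbF mem_sort.
  apply/imageP/existsP => [[p pK ->]|[p /andP[pK /eqP <-]]]; exists p => //.
  by rewrite pK eqxx.
Qed.

Lemma calM_val n (u v : 'S_n) : calM u v = mu u v.
Proof.
rewrite ffunE; case: (boolP (weak_le u v)) => h.
  rewrite (bigD1 v) //= ffunE eqxx mulr1 big1 ?addr0 // => w /andP[_ ne].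
  by rewrite ffunE (eq_sym v) (negbTE ne) mulr0.
rewrite mu_out // big1 // => w hw; rewrite ffunE; case: eqP => [E|]; last by rewrite mulr0.
by move: h; rewrite E hw.
Qed.

Lemma mob' n (u z : 'S_n) : (\sum_(v | weak_le v z) mu u v = (u == z)%:R)%R.
Proof.
case: (boolP (weak_le u z)) => h; first exact: mob.
rewrite big1.
  case: eqP => // E; move: h; rewrite E /weak_le subxx //.
move=> v vz; apply: mu_out; apply: contra h => uv; exact: weak_le_trans uv vz.
Qed.

Lemma oneline_inj n (u v : 'S_n) : oneline u = oneline v -> u = v.
Proof.
move=> E; apply/permP => i; apply: val_inj.
have := nth_oneline u i; rewrite E nth_oneline; by case.
Qed.

Local Open Scope ring_scope.

Theorem mainTheorem13 (n : nat) (hn : (1 <= n)%N) (u : 'S_n) (N : nat) :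
  DD N (calM u) = (if is_closed u then QM N (GDes u) else 0).
Proof.
rewrite /DD.
under eq_bigr do rewrite calM_val /QF scaler_sumr.
rewrite (exchange_big_dep (fun K => subset_n1 K)) /=; last by move=> v K _ /andP[].
have step : forall K, subset_n1 K ->
  \sum_(v | subset_n1 K && (Des v \subset K)) mu u v *: QM N K = (u == zperm K)%:R *: QM N K.
  move=> K sK; rewrite -scaler_suml; congr (_ *: _).
  rewrite -(mob' u (zperm K)); apply: eq_bigl => v; by rewrite sK Des_sub.
rewrite (eq_bigr _ step).
case: ifP => closed.
  move/existsP: closed => [J /andP[sJ /eqP hJ]].
  have uJ : u = zperm J by apply: oneline_inj; rewrite hJ zeta_z.
  rewrite (bigD1 J) //= uJ eqxx scale1r big1 ?addr0; first by rewrite GDes_z.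
  move=> K /andP[sK KJ]; case: eqP => [E|]; last by rewrite scale0r.
  by move: KJ; rewrite -(GDes_z sK) -E GDes_z // eqxx.
rewrite big1 // => K sK; case: eqP => [E|]; last by rewrite scale0r.
move: closed; have -> // : is_closed u.
apply/existsP; exists K; rewrite sK /= E zeta_z //.
Qed.
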